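(* Let $A$ be a hyperoperator on $\mathbb{R}^n$ on the complex Banach space $X$. Then: (a) If $f\in\mathcal{E}(\mathbb{R}^n,\mathbb{R})$, then $f(a)$ maps $D_A$ into $D_A$, and if also $g\in\mathcal{E}(\mathbb{R}^n,\mathbb{R})$, then $g(a)f(a)=(fg)(a)$ on $D_A$. (b) If $f\in\mathcal{E}(\mathbb{R}^n,\mathbb{R}^m)$, then $f(a)$ is a closable operator (i.e. the closure in $X\times X^m$ of its graph is the graph of an operator). (c) If $f_k\to f$ in $\mathcal{E}(\mathbb{R}^n,\mathbb{R}^p)$, then $f_k(a)x\to f(a)x$ for every $x\in D_A$. (d) If $K\subset\mathbb{R}^n$ is compact, $x_j\in D_{A,K}$ for all $j$, $x_j\to x$ in $X$, and $f\in\mathcal{E}(\mathbb{R}^n,\mathbb{R}^m)$, then $f(a)x_j\to f(a)x$.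
   Context: $X$ is a complex Banach space, $L(X)$ the bounded operators. $\mathcal{D}(\mathbb{R}^n)=C_c^\infty(\mathbb{R}^n)$ (complex-valued); $\mathcal{E}(\mathbb{R}^n,\mathbb{R}^m)$ the smooth maps $\mathbb{R}^n\to\mathbb{R}^m$ with the topology of uniform convergence of all derivatives on compacts. A hyperoperator on $\mathbb{R}^n$ is a linear map $A:\mathcal{D}(\mathbb{R}^n)\to L(X)$ which is continuous ($A(\phi_j)\to0$ in operator norm when $\phi_j\to0$ in $\mathcal{D}(\mathbb{R}^n)$), multiplicative ($A(\phi\psi)=A(\phi)A(\psi)$), and such that (i) $D_A:=\bigcup_\phi\operatorname{Im}A(\phi)$ is dense and (ii) $\bigcap_\phi\operatorname{Ker}A(\phi)=\{0\}$. For a smooth $f:\mathbb{R}^n\to\mathbb{R}^m$ and $x\in D_A$, written $x=A(\phi)y$, one sets $f(a)x:=A(f\phi)y$ (componentwise); this is well defined and equals $A(f\chi)x$ for any $\chi\in\mathcal{D}(\mathbb{R}^n)$ with $\chi=1$ near $\operatorname{supp}\phi$, so $f(a)$ is a densely defined operator $D_A\to X^m$. For $x\in X$, the local spectrum $\sigma_x(A)$ is the support of the $X$-valued distribution $\phi\mapsto A(\phi)x$, and $D_{A,K}=\{x\in X:\sigma_x(A)\subset K\}$. *)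

(* Defs.v *)
From HB Require Import structures.
From mathcomp Require Import all_boot all_order all_algebra.
From mathcomp Require Import all_classical all_reals all_analysis.
From mathcomp Require Import complex.
Set Implicit Arguments. Unset Strict Implicit. Unset Printing Implicit Defensive.
Import Order.TTheory GRing.Theory Num.Theory numFieldNormedType.Exports.
Local Open Scope classical_set_scope.
Local Open Scope ring_scope.

Definition Dseq (R : realType) (n : nat) (vs : seq 'rV[R]_n)
    (f : 'rV[R]_n -> R) : 'rV[R]_n -> R :=
  foldr (fun v g => 'D_v g) f vs.

Definition smooth (R : realType) (n : nat) (f : 'rV[R]_n -> R) : Prop :=
  forall vs : seq 'rV[R]_n,
    continuous (Dseq vs f) /\ forall x v, derivable (Dseq vs f) x v.

Definition smoothv (R : realType) (n m : nat) (f : 'rV[R]_n -> 'rV[R]_m) : Prop :=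
  forall i : 'I_m, smooth (fun t => f t ord0 i).

Definition Ecvg (R : realType) (n p : nat) (fk : nat -> 'rV[R]_n -> 'rV[R]_p)
    (f : 'rV[R]_n -> 'rV[R]_p) : Prop :=
  (forall k, smoothv (fk k)) /\ smoothv f /\
  forall (i : 'I_p) (vs : seq 'rV[R]_n) (K : set 'rV[R]_n), compact K ->
    forall e : R, 0 < e -> \forall k \near \oo, forall t, K t ->
      `| Dseq vs (fun s => fk k s ord0 i) t - Dseq vs (fun s => f s ord0 i) t | <= e.

Definition cRe (R : realType) (n : nat) (phi : 'rV[R]_n -> R[i]) : 'rV[R]_n -> R :=
  fun t => complex.Re (phi t).
Definition cIm (R : realType) (n : nat) (phi : 'rV[R]_n -> R[i]) : 'rV[R]_n -> R :=
  fun t => complex.Im (phi t).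

Definition supp (R : realType) (n : nat) (phi : 'rV[R]_n -> R[i]) : set 'rV[R]_n :=
  closure [set t | phi t != 0].

Definition test (R : realType) (n : nat) (phi : 'rV[R]_n -> R[i]) : Prop :=
  smooth (cRe phi) /\ smooth (cIm phi) /\ compact (supp phi).

Definition unif0 (R : realType) (n : nat) (g : nat -> 'rV[R]_n -> R) : Prop :=
  forall e : R, 0 < e -> \forall j \near \oo, forall t, `|g j t| <= e.

Definition Dcvg0 (R : realType) (n : nat) (phi : nat -> 'rV[R]_n -> R[i]) : Prop :=
  (forall j, test (phi j)) /\
  (exists K : set 'rV[R]_n, compact K /\ forall j, supp (phi j) `<=` K) /\
  forall vs : seq 'rV[R]_n,
    unif0 (fun j => Dseq vs (cRe (phi j))) /\ unif0 (fun j => Dseq vs (cIm (phi j))).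

Definition bounded_op (R : realType) (X : completeNormedModType R[i])
    (T : X -> X) : Prop :=
  (forall (a : R[i]) (x y : X), T (a *: x + y) = a *: T x + T y) /\ continuous T.

Definition opnorm0 (R : realType) (X : completeNormedModType R[i])
    (T : nat -> X -> X) : Prop :=
  forall e : R[i], 0 < e -> \forall j \near \oo, forall x : X, `|T j x| <= e * `|x|.

Definition DA (R : realType) (X : completeNormedModType R[i]) (n : nat)
    (A : ('rV[R]_n -> R[i]) -> X -> X) : set X :=
  [set x | exists (phi : 'rV[R]_n -> R[i]) (y : X), test phi /\ x = A phi y].

Definition hyperoperator (R : realType) (X : completeNormedModType R[i]) (n : nat)
    (A : ('rV[R]_n -> R[i]) -> X -> X) : Prop :=
  [/\ (forall phi, test phi -> bounded_op (A phi)),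
      (forall (a : R[i]) phi psi, test phi -> test psi ->
          A (fun t => a * phi t + psi t) = (fun x => a *: A phi x + A psi x)),
      (forall phi psi, test phi -> test psi ->
          A (fun t => phi t * psi t) = (A phi \o A psi)),
      (forall phis, Dcvg0 phis -> opnorm0 (fun j => A (phis j))) &
      closure (DA A) = setT /\
      (forall x : X, (forall phi, test phi -> A phi x = 0) -> x = 0)].

(* f(a) for f : R^n -> R : for x = A(phi) y in D_A, f(a) x := A(f phi) y
   (with a chosen representation); 0 outside D_A *)
Definition fa1 (R : realType) (X : completeNormedModType R[i]) (n : nat)
    (A : ('rV[R]_n -> R[i]) -> X -> X) (f : 'rV[R]_n -> R) (x : X) : X :=
  match pselect (exists p : ('rV[R]_n -> R[i]) * X, test p.1 /\ x = A p.1 p.2) with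
  | left h => let p := proj1_sig (cid h) in A (fun t => ((f t)%:C)%C * p.1 t) p.2
  | right _ => 0
  end.

Definition fa (R : realType) (X : completeNormedModType R[i]) (n m : nat)
    (A : ('rV[R]_n -> R[i]) -> X -> X) (f : 'rV[R]_n -> 'rV[R]_m) (x : X) : 'I_m -> X :=
  fun i => fa1 A (fun t => f t ord0 i) x.

(* (x, z) lies in the closure in X x X^m of the graph of f(a) : D_A -> X^m
   (X x X^m is metrizable, so closure = sequential closure) *)
Definition in_graph_closure (R : realType) (X : completeNormedModType R[i]) (n m : nat)
    (A : ('rV[R]_n -> R[i]) -> X -> X) (f : 'rV[R]_n -> 'rV[R]_m)
    (x : X) (z : 'I_m -> X) : Prop :=
  exists xs : nat -> X, (forall j, DA A (xs j)) /\ (xs j @[j --> \oo] --> x) /\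
    forall i : 'I_m, fa A f (xs j) i @[j --> \oo] --> z i.

Definition closable (R : realType) (X : completeNormedModType R[i]) (n m : nat)
    (A : ('rV[R]_n -> R[i]) -> X -> X) (f : 'rV[R]_n -> 'rV[R]_m) : Prop :=
  forall x z1 z2, in_graph_closure A f x z1 -> in_graph_closure A f x z2 -> z1 = z2.

(* local spectrum: support of the X-valued distribution phi |-> A(phi) x *)
Definition locspec (R : realType) (X : completeNormedModType R[i]) (n : nat)
    (A : ('rV[R]_n -> R[i]) -> X -> X) (x : X) : set 'rV[R]_n :=
  [set t | forall U : set 'rV[R]_n, open U -> U t ->
     exists phi, test phi /\ supp phi `<=` U /\ A phi x != 0].

Definition DAK (R : realType) (X : completeNormedModType R[i]) (n : nat)
    (A : ('rV[R]_n -> R[i]) -> X -> X) (K : set 'rV[R]_n) : set X :=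
  [set x | locspec A x `<=` K].

(* Main.v *)
Require Import Defs.
From HB Require Import structures.
From mathcomp Require Import all_boot all_order all_algebra.
From mathcomp Require Import all_classical all_reals all_analysis.
From mathcomp Require Import complex.
From mathcomp Require Import ring lra.
Import Order.TTheory GRing.Theory Num.Theory numFieldNormedType.Exports.
Local Open Scope classical_set_scope.
Local Open Scope ring_scope.
Set Implicit Arguments. Unset Strict Implicit. Unset Printing Implicit Defensive.

Section Calc.
Variables (R : realType) (n : nat).
Notation V := 'rV[R]_n.
Implicit Types (f g : V -> R).

Lemma Dseq_rcons vs v f : Dseq (rcons vs v) f = Dseq vs ('D_v f).
Proof. by rewrite /Dseq foldr_rcons. Qed.

Definition smoothN (N : nat) f := forall vs : seq V, (size vs <= N)%N ->
  continuous (Dseq vs f) /\ forall x v, derivable (Dseq vs f) x v.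

Lemma smoothP f : smooth f <-> forall N, smoothN N f.
Proof.
split=> [sf N vs _|sf vs]; first exact: sf.
exact: (sf (size vs)).
Qed.

Lemma smoothN0 f : smoothN 0 f <-> continuous f /\ forall x v, derivable f x v.
Proof.
split=> [/(_ [::] isT)//|h [|//] _]; exact: h.
Qed.

Lemma smoothNS N f : smoothN N.+1 f <->
  (continuous f /\ forall x v, derivable f x v) /\ forall v, smoothN N ('D_v f).
Proof.
split.
  move=> sf; split; first exact: (sf [::]).
  move=> v vs svs; rewrite -Dseq_rcons; apply: sf; by rewrite size_rcons.
move=> [h0 hS] vs; case/lastP: vs => [//|ws v]; rewrite size_rcons ltnS => sw.
rewrite Dseq_rcons; exact: hS.
Qed.

Lemma smoothN_le N M f : (M <= N)%N -> smoothN N f -> smoothN M f.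
Proof. by move=> MN sf vs svs; apply: sf; exact: leq_trans svs MN. Qed.

Lemma smoothN_smooth f : smooth f -> forall N, smoothN N f.
Proof. by move/smoothP. Qed.

Lemma smoothD f : smooth f -> (forall v, smooth ('D_v f)).
Proof. by move=> sf v vs; rewrite -Dseq_rcons; exact: sf. Qed.

End Calc.

Section Calc2.
Variables (R : realType) (n : nat).
Notation V := 'rV[R]_n.
Implicit Types (f g : V -> R).

Lemma DaddE f g v : (forall x, derivable f x v) -> (forall x, derivable g x v) ->
  'D_v (fun t => f t + g t) = (fun t => 'D_v f t + 'D_v g t).
Proof.
move=> df dg; apply/funext => x.
have -> : (fun t => f t + g t) = f + g by [].
by rewrite deriveD.
Qed.

Lemma DmulE f g v : (forall x, derivable f x v) -> (forall x, derivable g x v) ->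
  'D_v (fun t => f t * g t) = (fun t => 'D_v f t * g t + f t * 'D_v g t).
Proof.
move=> df dg; apply/funext => x.
have -> : (fun t => f t * g t) = f * g by [].
by rewrite deriveM // addrC; congr (_ + _); exact: mulrC.
Qed.

Lemma DcstE (c : R) v : 'D_v (fun _ : V => c) = (fun _ => 0).
Proof. by apply/funext => x; exact: (derive_cst c x v). Qed.

Lemma DinvE f v : (forall x, f x != 0) -> (forall x, derivable f x v) ->
  'D_v (fun t => (f t)^-1) = (fun t => - ((f t)^-1 * (f t)^-1) * 'D_v f t).
Proof.
move=> f0 df; apply/funext => x.
by rewrite deriveV // expr2 invfM.
Qed.

Lemma smoothN_eq N f g : f = g -> smoothN N g -> smoothN N f.
Proof. by move->. Qed.

Lemma smoothN_cst N (c : R) : smoothN N (fun _ : V => c).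
Proof.
elim: N c => [|N IH] c.
  by apply/smoothN0; split=> [x|x v]; [exact: cst_continuous | exact: derivable_cst].
apply/smoothNS; split.
  by split=> [x|x v]; [exact: cst_continuous | exact: derivable_cst].
move=> v; apply: (smoothN_eq (DcstE c v)); exact: IH.
Qed.

Lemma smoothN_add N f g : smoothN N f -> smoothN N g ->
  smoothN N (fun t => f t + g t).
Proof.
elim: N f g => [|N IH] f g.
  move=> /smoothN0[cf df] /smoothN0[cg dg]; apply/smoothN0; split.
    by move=> x; exact: (continuousD (cf x) (cg x)).
  by move=> x v; exact: (derivableD (df x v) (dg x v)).
move=> /smoothNS[[cf df] sf] /smoothNS[[cg dg] sg]; apply/smoothNS; split.
  split; first by move=> x; exact: (continuousD (cf x) (cg x)).
  by move=> x v; exact: (derivableD (df x v) (dg x v)).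
by move=> v; apply: (smoothN_eq (DaddE (df^~ v) (dg^~ v))); apply: IH.
Qed.

Lemma smoothN_mul N f g : smoothN N f -> smoothN N g ->
  smoothN N (fun t => f t * g t).
Proof.
elim: N f g => [|N IH] f g.
  move=> /smoothN0[cf df] /smoothN0[cg dg]; apply/smoothN0; split.
    by move=> x; exact: (continuousM (cf x) (cg x)).
  by move=> x v; exact: (derivableM (df x v) (dg x v)).
move=> sf sg.
have sf' := sf; have sg' := sg.
move: sf sg => /smoothNS[[cf df] sf] /smoothNS[[cg dg] sg]; apply/smoothNS; split.
  split; first by move=> x; exact: (continuousM (cf x) (cg x)).
  by move=> x v; exact: (derivableM (df x v) (dg x v)).
move=> v; apply: (smoothN_eq (DmulE (df^~ v) (dg^~ v))); apply: smoothN_add; apply: IH => //;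
  exact: smoothN_le sf' || exact: smoothN_le sg'.
Qed.

Lemma smoothN_opp N f : smoothN N f -> smoothN N (fun t => - f t).
Proof.
move=> sf; have -> : (fun t => - f t) = (fun t => (fun _ => -1) t * f t).
  by apply/funext => t; rewrite mulN1r.
by apply: smoothN_mul => //; apply: smoothN_cst.
Qed.

Lemma smoothN_inv N f : smoothN N f -> (forall x, f x != 0) ->
  smoothN N (fun t => (f t)^-1).
Proof.
move=> sf f0; elim: N sf => [|N IH] sf.
  move: sf => /smoothN0[cf df]; apply/smoothN0; split.
    by move=> x; exact: (continuousV (f0 x) (cf x)).
  by move=> x v; exact: (derivableV (f0 x) (df x v)).
have sf' := sf; move: sf => /smoothNS[[cf df] sf]; apply/smoothNS; split.
  split; first by move=> x; exact: (continuousV (f0 x) (cf x)).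
  by move=> x v; exact: (derivableV (f0 x) (df x v)).
move=> v; apply: (smoothN_eq (DinvE f0 (df^~ v))).
have iN := IH (smoothN_le (leqnSn N) sf').
apply: smoothN_mul => //; apply: smoothN_opp; exact: smoothN_mul.
Qed.

End Calc2.

Section Calc3.
Variables (R : realType) (n : nat).
Notation V := 'rV[R]_n.
Implicit Types (f g : V -> R).

Lemma D1dE f x v : 'D_v f x = 'D_1 (fun h : R => f (h *: v + x)) 0.
Proof.
rewrite /derive (_ : (fun h : R => h^-1 *: ((f \o shift x) (h *: v) - f x)) =
  (fun h : R => h^-1 *: (((fun h : R => f (h *: v + x)) \o shift 0) (h *: 1) - f (0 *: v + x)))) //.
by apply/funext => h /=; rewrite addr0 scale0r add0r [_%:A]mulr1.
Qed.

Lemma chain_is_derive (g : R -> R) f x v d :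
  is_derive (f x) 1 g d -> derivable f x v ->
  is_derive x v (fun t => g (f t)) (d * 'D_v f x).
Proof.
move=> gd fd.
pose F := fun h : R => f (h *: v + x).
have F0 : F 0 = f x by rewrite /F scale0r add0r.
have Fd : is_derive (0:R) (1:R) F ('D_v f x).
  split; first exact: (proj1 (derivable1P f x v) fd).
  by rewrite D1dE.
have gd' : is_derive (F 0) (1:R) g d by rewrite F0.
have H := @is_derive1_comp R g F 0 d ('D_v f x) gd' Fd.
split.
  apply/derivable1P; exact: (@ex_derive _ _ _ _ _ _ _ H).
rewrite D1dE; exact: (@derive_val _ _ _ _ _ _ _ H).
Qed.

Lemma coord_is_derive (i : 'I_n) x v :
  is_derive x v (fun t : V => t ord0 i) (v ord0 i).
Proof.
have L : (fun h : R => h^-1 *: (((fun t : V => t ord0 i) \o shift x) (h *: v) - x ord0 i))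
   @ 0^' --> v ord0 i.
  apply: cvg_near_cst; near=> h.
  have h0 : h != 0 by near: h; exact: nbhs_dnbhs_neq.
  by rewrite /= !mxE addrK [_ *: _]mulKf.
split; first by apply/cvg_ex; exists (v ord0 i).
exact: cvg_lim L.
Unshelve. all: by end_near.
Qed.

End Calc3.

Section U.
Variable (R : realType).

Definition uf (m : nat) (s : R) : R :=
  if 0 < s then (s^-1) ^+ m * expR (- s^-1) else 0.

Lemma uf_ge0 m s : 0 <= uf m s.
Proof.
rewrite /uf; case: ifP => // s0.
by rewrite mulr_ge0 ?expR_ge0 // exprn_ge0 // invr_ge0 ltW.
Qed.

Lemma uf_gt0 m s : 0 < s -> 0 < uf m s.
Proof.
move=> s0; rewrite /uf s0.
by rewrite mulr_gt0 ?expR_gt0 // exprn_gt0 // invr_gt0.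
Qed.

Lemma uf_le0 m s : s <= 0 -> uf m s = 0.
Proof. by move=> s0; rewrite /uf ltNge s0. Qed.

Lemma uf_bound m s : `|uf m s| <= (m.+1)`!%:R * `|s|.
Proof.
have [s0|s0] := leP s 0.
  by rewrite uf_le0 // normr0 mulr_ge0.
rewrite ger0_norm ?uf_ge0 // gtr0_norm // /uf s0.
set w := s^-1.
have w0 : 0 < w by rewrite invr_gt0.
have F0 : 0 < (m.+1)`!%:R :> R by rewrite ltr0n fact_gt0.
have h : w ^+ m.+1 <= (m.+1)`!%:R * expR w.
  have h1 : w ^+ m.+1 / (m.+1)`!%:R <= expR w.
    by apply: le_trans (expR_ge1Dxn m (ltW w0)); rewrite lerDr.
  rewrite -[w ^+ _](divfK (lt0r_neq0 F0)) mulrC.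
  by apply: ler_wpM2l => //; exact: ltW.
rewrite expRN ler_pdivrMr ?expR_gt0 //.
have -> : w ^+ m = w ^+ m.+1 * s by rewrite exprS mulrAC /w mulVf ?gt_eqF // mul1r.
by rewrite [_ * s * _]mulrAC; apply: ler_wpM2r => //; exact: ltW.
Qed.

Lemma uf_cvg0 m : uf m h @[h --> (0:R)] --> (0:R).
Proof.
apply: (@squeeze_cvgr _ _ _ _ (fun=> 0) (fun h => (m.+1)`!%:R * `|h|)).
- by near=> h; rewrite uf_ge0 /=; apply: le_trans (uf_bound m h); exact: ler_norm.
- exact: cvg_cst.
- rewrite -[X in _ --> X](mulr0 (m.+1)`!%:R) -[X in _ * X](normr0 R).
  apply: cvgMr; exact: cvg_norm.
Unshelve. all: by end_near.
Qed.

End U.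


Section U2.
Variable (R : realType).
Implicit Types (s : R).

Lemma uf_pos_is_derive m s : 0 < s ->
  is_derive s (1:R) (uf m) (- m%:R * uf m.+1 s + uf m.+2 s).
Proof.
move=> s0.
pose G := ((fun t : R => t^-1) ^+ m) * (expR \o (fun t : R => - t^-1)).
have E : \forall t \near s, G t = uf m t.
  near=> t.
  have t0 : 0 < t by near: t; exact: (cvgr_gt s).
  by rewrite /G /uf t0 exprfctE.
apply: (near_eq_is_derive E).
have s0' : s != 0 by rewrite gt_eqF.
have Hi : is_derive s (1:R) (fun t : R => t^-1) (- s ^- 2).
  have := @is_deriveV R id s 1 1 s0' (is_derive_id _ _).
  by rewrite scaler1.
have HX : is_derive s (1:R) ((fun t : R => t^-1) ^+ m) ((m%:R * s^-1 ^+ m.-1) *: - s ^- 2).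
  exact: is_deriveX.
have HN : is_derive s (1:R) (fun t : R => - t^-1) (- - s ^- 2).
  exact: is_deriveN.
have HE : is_derive s (1:R) (expR \o (fun t : R => - t^-1)) (expR (- s^-1) * - - s ^- 2).
  exact: is_derive1_comp.
have HM := is_deriveM HX HE.
rewrite /G; apply: (is_derive_eq HM).
rewrite /uf s0 exprfctE /=.
rewrite -exprVn; clear HM HX HE HN E G.
case: m => [|k] /=; rewrite ?mul0r ?mul1r ?add0r; rewrite !exprS ?expr0 /GRing.scale /=.
  ring.
rewrite -natr1. ring.

Unshelve. all: by end_near.
Qed.
End U2.
Section U3.
Variable (R : realType).
Implicit Types (s : R).

Lemma uf_zero_is_derive m :
  is_derive (0:R) (1:R) (uf m) (- m%:R * uf m.+1 (0:R) + uf m.+2 (0:R)).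
Proof.
rewrite !(@uf_le0 R) // mulr0 addr0.
have L : (fun h : R => h^-1 *: ((uf m \o shift 0) (h *: 1) - uf m 0)) @ 0^' --> (0:R).
  apply: (cvg_trans _ (cvg_within_filter _ (uf_cvg0 m.+1))).
  apply: near_eq_cvg; near=> h.
  have h0 : h != 0 by near: h; exact: nbhs_dnbhs_neq.
  rewrite /= (uf_le0 m (lexx 0)) subr0 [_%:A]mulr1 addr0 /uf.
  case: ifP => hp; last by rewrite /GRing.scale /= mulr0.
  by rewrite /GRing.scale /= exprS mulrA.
split; first by apply/cvg_ex; exists 0.
exact: cvg_lim L.
Unshelve. all: by end_near.
Qed.

Lemma uf_neg_is_derive m s : s < 0 ->
  is_derive s (1:R) (uf m) (- m%:R * uf m.+1 s + uf m.+2 s).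
Proof.
move=> s0; rewrite !uf_le0 ?ltW // mulr0 addr0.
have E : \forall t \near s, (cst 0 : R -> R) t = uf m t.
  near=> t.
  have t0 : t < 0 by near: t; exact: (cvgr_lt s).
  by rewrite /= uf_le0 // ltW.
apply: (near_eq_is_derive E); exact: is_derive_cst.
Unshelve. all: by end_near.
Qed.

Lemma uf_is_derive m s :
  is_derive s (1:R) (uf m) (- m%:R * uf m.+1 s + uf m.+2 s).
Proof.
have [s0|s0|->] := ltgtP s 0.
- exact: uf_neg_is_derive.
- exact: uf_pos_is_derive.
- exact: uf_zero_is_derive.
Qed.

Lemma uf_continuous m : continuous (@uf R m).
Proof.
move=> s; have [d _] := uf_is_derive m s.
exact/differentiable_continuous/derivable1_diffP.
Qed.

End U3.

Section Comp.
Variables (R : realType) (n : nat).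
Notation V := 'rV[R]_n.
Implicit Types (f g q : V -> R).

Lemma smooth_cst (c : R) : smooth (fun _ : V => c).
Proof. by apply/smoothP => N; exact: smoothN_cst. Qed.

Lemma smooth_add f g : smooth f -> smooth g -> smooth (fun t => f t + g t).
Proof. by move=> /smoothP sf /smoothP sg; apply/smoothP => N; exact: smoothN_add. Qed.

Lemma smooth_mul f g : smooth f -> smooth g -> smooth (fun t => f t * g t).
Proof. by move=> /smoothP sf /smoothP sg; apply/smoothP => N; exact: smoothN_mul. Qed.

Lemma smooth_opp f : smooth f -> smooth (fun t => - f t).
Proof. by move=> /smoothP sf; apply/smoothP => N; exact: smoothN_opp. Qed.

Lemma smooth_inv f : smooth f -> (forall x, f x != 0) -> smooth (fun t => (f t)^-1).
Proof. by move=> /smoothP sf f0; apply/smoothP => N; exact: smoothN_inv. Qed.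

Lemma smooth_coord (i : 'I_n) : smooth (fun t : V => t ord0 i).
Proof.
apply/smoothP => N; elim: N => [|N IH].
  apply/smoothN0; split; first exact: (@coord_continuous R 1 n ord0 i).
  by move=> x v; case: (coord_is_derive i x v).
apply/smoothNS; split.
  split; first exact: (@coord_continuous R 1 n ord0 i).
  by move=> x v; case: (coord_is_derive i x v).
move=> v.
have -> : 'D_v (fun t : V => t ord0 i) = (fun _ => v ord0 i).
  by apply/funext => x; case: (coord_is_derive i x v).
exact: smoothN_cst.
Qed.

Lemma smoothN_uf N m q : smooth q -> smoothN N (fun t => uf m (q t)).
Proof.
move=> sq; elim: N m => [|N IH] m.
  apply/smoothN0; split.
    move=> x; apply: continuous_comp; first by have [c _] := sq [::]; exact: c.
    exact: uf_continuous.
  move=> x v; have [_ dq] := sq [::].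
  by case: (chain_is_derive (uf_is_derive m (q x)) (dq x v)).
apply/smoothNS; split.
  split.
    move=> x; apply: continuous_comp; first by have [c _] := sq [::]; exact: c.
    exact: uf_continuous.
  move=> x v; have [_ dq] := sq [::].
  by case: (chain_is_derive (uf_is_derive m (q x)) (dq x v)).
move=> v.
have -> : 'D_v (fun t => uf m (q t)) =
    (fun t => (- m%:R * uf m.+1 (q t) + uf m.+2 (q t)) * 'D_v q t).
  apply/funext => x; have [_ dq] := sq [::].
  by case: (chain_is_derive (uf_is_derive m (q x)) (dq x v)).
apply: smoothN_mul; last exact/smoothN_smooth/smoothD.
apply: smoothN_add => //; apply: smoothN_mul => //; exact: smoothN_cst.
Qed.

Lemma smooth_uf m q : smooth q -> smooth (fun t => uf m (q t)).
Proof. by move=> sq; apply/smoothP => N; exact: smoothN_uf. Qed.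

End Comp.

Section Tests.
Variables (R : realType) (n : nat).
Notation V := 'rV[R]_n.
Implicit Types (f g : V -> R) (phi psi : V -> R[i]).

Lemma closure_sub_closed (A B : set V) : closed B -> A `<=` B -> closure A `<=` B.
Proof. by move=> cB AB; rewrite closureE; apply: smallest_sub. Qed.

Lemma supp_sub phi psi : (forall t, psi t = 0 -> phi t = 0) -> supp phi `<=` supp psi.
Proof.
move=> h; apply: closureS => t /= /eqP pt; apply/eqP => p0; apply: pt; exact: h.
Qed.

Lemma compact_supp_sub phi psi : (forall t, psi t = 0 -> phi t = 0) ->
  compact (supp psi) -> compact (supp phi).
Proof.
move=> h c; apply: subclosed_compact c (supp_sub h); exact: closed_closure.
Qed.

Lemma test_mulr f phi : smooth f -> test phi -> test (fun t => ((f t)%:C)%C * phi t).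
Proof.
move=> sf [sr [si cs]]; split; [|split].
- have -> : cRe (fun t => ((f t)%:C)%C * phi t) = (fun t => f t * cRe phi t).
    by apply/funext => t; rewrite /cRe; case: (phi t) => a b /=; ring.
  exact: smooth_mul.
- have -> : cIm (fun t => ((f t)%:C)%C * phi t) = (fun t => f t * cIm phi t).
    by apply/funext => t; rewrite /cIm; case: (phi t) => a b /=; ring.
  exact: smooth_mul.
- by apply: compact_supp_sub cs => t ->; rewrite mulr0.
Qed.

Lemma test_mul phi psi : test phi -> test psi -> test (fun t => phi t * psi t).
Proof.
move=> [sr [si cs]] [sr' [si' cs']]; split; [|split].
- have -> : cRe (fun t => phi t * psi t) =
     (fun t => cRe phi t * cRe psi t + - (cIm phi t * cIm psi t)).
    by apply/funext => t; rewrite /cRe /cIm; case: (phi t) => a b; case: (psi t) => c d /=.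
  by apply: smooth_add; [exact: smooth_mul|apply: smooth_opp; exact: smooth_mul].
- have -> : cIm (fun t => phi t * psi t) =
     (fun t => cRe phi t * cIm psi t + cIm phi t * cRe psi t).
    by apply/funext => t; rewrite /cRe /cIm; case: (phi t) => a b; case: (psi t) => c d /=.
  by apply: smooth_add; exact: smooth_mul.
- by apply: compact_supp_sub cs => t ->; rewrite mul0r.
Qed.

Lemma test_lin (a : R[i]) phi psi : test phi -> test psi ->
  test (fun t => a * phi t + psi t).
Proof.
move=> [sr [si cs]] [sr' [si' cs']]; split; [|split].
- have -> : cRe (fun t => a * phi t + psi t) =
     (fun t => (fun _ => complex.Re a) t * cRe phi t + - ((fun _ => complex.Im a) t * cIm phi t) + cRe psi t).
    by apply/funext => t; rewrite /cRe /cIm; case: a => a1 a2; case: (phi t) => b c;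
      case: (psi t) => d e /=.
  apply: smooth_add => //; apply: smooth_add; first by apply: smooth_mul => //; exact: smooth_cst.
  by apply: smooth_opp; apply: smooth_mul => //; exact: smooth_cst.
- have -> : cIm (fun t => a * phi t + psi t) =
     (fun t => (fun _ => complex.Re a) t * cIm phi t + (fun _ => complex.Im a) t * cRe phi t + cIm psi t).
    by apply/funext => t; rewrite /cRe /cIm; case: a => a1 a2; case: (phi t) => b c;
      case: (psi t) => d e /=.
  by apply: smooth_add => //; apply: smooth_add; apply: smooth_mul => //; exact: smooth_cst.
- have : compact (supp phi `|` supp psi) by exact: compactU.
  move=> c; apply: (subclosed_compact _ c); first exact: closed_closure.
  rewrite /supp -closureU; apply: closureS => t /= /eqP h.
  have [p0|p0] := eqVneq (phi t) 0; last by left; apply/eqP.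
  by right; apply/eqP => q0; apply: h; rewrite p0 q0 mulr0 addr0.
Qed.

Lemma test_real g : smooth g -> compact (closure [set t | g t != 0]) ->
  test (fun t => ((g t)%:C)%C).
Proof.
move=> sg cg; split; [|split] => //.
- exact: smooth_cst.
- rewrite /supp; suff -> : [set t | ((g t)%:C)%C != 0] = [set t | g t != 0] by [].
  by apply/funext => t /=; apply/propext; split => /eqP h; apply/eqP => h0;
    apply: h; [rewrite h0 | case: h0].
Qed.

Lemma test0 : test (fun _ : V => 0 : R[i]).
Proof.
have -> : (fun _ : V => 0 : R[i]) = (fun t => (((fun _ => 0 : R) t)%:C)%C) by [].
apply: (@test_real (fun _ => 0 : R)); first exact: smooth_cst.
have -> : [set t : V | (0:R) != 0] = set0 by apply/funext => t /=; apply/propext; split=> //; rewrite eqxx.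
by rewrite closure0; exact: compact0.
Qed.

End Tests.

Section Ops.
Variables (R : realType) (X : completeNormedModType R[i]) (n : nat).
Variable (A : ('rV[R]_n -> R[i]) -> X -> X).
Hypothesis hA : hyperoperator A.
Notation V := 'rV[R]_n.
Implicit Types (f g : V -> R) (phi psi theta : V -> R[i]).

Lemma hA_bnd phi : test phi -> bounded_op (A phi).
Proof. by move=> tp; case: hA => h _ _ _ _; exact: h. Qed.

Lemma hA_lin (a : R[i]) phi psi : test phi -> test psi ->
  A (fun t => a * phi t + psi t) = (fun x => a *: A phi x + A psi x).
Proof. by case: hA => _ h _ _ _; exact: h. Qed.

Lemma hA_mul phi psi : test phi -> test psi ->
  A (fun t => phi t * psi t) = (A phi \o A psi).
Proof. by case: hA => _ _ h _ _; exact: h. Qed.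

Lemma hA_ker (x : X) : (forall phi, test phi -> A phi x = 0) -> x = 0.
Proof. by case: hA => _ _ _ _ [_ h]; exact: h. Qed.

Lemma opD phi x y : test phi -> A phi (x + y) = A phi x + A phi y.
Proof. by move=> /hA_bnd [l _]; have := l 1 x y; rewrite !scale1r. Qed.

Lemma op0 phi : test phi -> A phi 0 = 0.
Proof.
move=> tp; have := opD 0 0 tp; rewrite [0 + 0]addr0.
by move=> /(congr1 (fun z => z - A phi 0)); rewrite subrr addrK.
Qed.

Lemma opZ phi (a : R[i]) x : test phi -> A phi (a *: x) = a *: A phi x.
Proof. by move=> tp; have [l _] := hA_bnd tp; have := l a x 0; rewrite !addr0 op0 // addr0. Qed.

Lemma opB phi x y : test phi -> A phi (x - y) = A phi x - A phi y.
Proof. by move=> tp; rewrite opD // -scaleN1r opZ // scaleN1r. Qed.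

Lemma op_cont phi : test phi -> continuous (A phi).
Proof. by move=> /hA_bnd []. Qed.

Lemma AD phi psi x : test phi -> test psi ->
  A (fun t => phi t + psi t) x = A phi x + A psi x.
Proof.
move=> tp tq; have := hA_lin 1 tp tq.
have -> : (fun t => 1 * phi t + psi t) = (fun t => phi t + psi t).
  by apply/funext => t; rewrite mul1r.
by move=> ->; rewrite scale1r.
Qed.

Lemma AB phi psi x : test phi -> test psi ->
  A (fun t => phi t - psi t) x = A phi x - A psi x.
Proof.
move=> tp tq; have := hA_lin (-1) tq tp.
have -> : (fun t => -1 * psi t + phi t) = (fun t => phi t - psi t).
  by apply/funext => t; rewrite mulN1r addrC.
by move=> ->; rewrite scaleN1r addrC.
Qed.

Lemma AM phi psi x : test phi -> test psi ->
  A (fun t => phi t * psi t) x = A phi (A psi x).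
Proof. by move=> tp tq; rewrite hA_mul. Qed.

Lemma A0 x : A (fun _ => 0) x = 0.
Proof.
have := AD x (@test0 R n) (@test0 R n).
have -> : (fun _ : V => (0:R[i]) + 0) = (fun _ => 0) by apply/funext => t; rewrite addr0.
by move=> /(congr1 (fun z => z - A (fun _ => 0) x)); rewrite subrr addrK.
Qed.

Lemma ker_eq (x y : X) : (forall theta, test theta -> A theta x = A theta y) -> x = y.
Proof.
move=> h; apply/eqP; rewrite -subr_eq0; apply/eqP; apply: hA_ker => th tt.
by rewrite opB // h // subrr.
Qed.

Lemma WD g phi psi (y z : X) : smooth g -> test phi -> test psi ->
  A phi y = A psi z ->
  A (fun t => (g t)%:C%C * phi t) y = A (fun t => (g t)%:C%C * psi t) z.
Proof.
move=> sg tp tq e; apply: ker_eq => th tt.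
have tg : test (fun t => (g t)%:C%C * th t) by exact: test_mulr.
rewrite -!AM //; try exact: test_mulr.
have -> : (fun t => th t * ((g t)%:C%C * phi t)) = (fun t => ((g t)%:C%C * th t) * phi t).
  by apply/funext => t; ring.
have -> : (fun t => th t * ((g t)%:C%C * psi t)) = (fun t => ((g t)%:C%C * th t) * psi t).
  by apply/funext => t; ring.
by rewrite (AM _ tg tp) (AM _ tg tq) e.
Qed.

Lemma fa1_rep g phi (y : X) : smooth g -> test phi ->
  fa1 A g (A phi y) = A (fun t => (g t)%:C%C * phi t) y.
Proof.
move=> sg tp; rewrite /fa1; case: pselect => [h|h]; last first.
  by exfalso; apply: h; exists (phi, y).
case: (cid h) => [[p1 p2] /= [tp1 e]].
by apply: WD => //; rewrite e.
Qed.

End Ops.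

Section PartsAB.
Variables (R : realType) (X : completeNormedModType R[i]) (n : nat).
Variable (A : ('rV[R]_n -> R[i]) -> X -> X).
Hypothesis hA : hyperoperator A.
Notation V := 'rV[R]_n.
Implicit Types (f g : V -> R) (phi psi theta : V -> R[i]).

Lemma cvg_op theta (u : nat -> X) l : test theta -> u j @[j --> \oo] --> l ->
  A theta (u j) @[j --> \oo] --> A theta l.
Proof. move=> tt hu; apply: continuous_cvg => //; exact: op_cont. Qed.

Lemma part_a f : smooth f ->
  (forall x, DA A x -> DA A (fa1 A f x)) /\
  (forall g : 'rV[R]_n -> R, smooth g ->
     forall x, DA A x -> fa1 A g (fa1 A f x) = fa1 A (fun t => f t * g t) x).
Proof.
move=> sf; split.
  move=> _ [phi [y [tp ->]]]; rewrite (fa1_rep hA) //.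
  by exists (fun t => (f t)%:C%C * phi t), y; split => //; exact: test_mulr.
move=> g sg _ [phi [y [tp ->]]].
rewrite (fa1_rep hA) // (fa1_rep hA) //; last exact: test_mulr.
rewrite (fa1_rep hA) //; last exact: smooth_mul.
congr (A _ y); apply/funext => t; rewrite rmorphM /=; ring.
Qed.

Lemma op_fa1 g theta x : smooth g -> test theta -> DA A x ->
  A theta (fa1 A g x) = A (fun t => (g t)%:C%C * theta t) x.
Proof.
move=> sg tt [phi [y [tp ->]]]; rewrite (fa1_rep hA) //.
rewrite -(AM hA); [|done|exact: test_mulr].
rewrite -(AM hA); [|exact: test_mulr|done].
by congr (A _ y); apply/funext => t; ring.
Qed.

Lemma graph_op m (f : V -> 'rV[R]_m) x z : smoothv f -> in_graph_closure A f x z ->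
  forall i theta, test theta ->
  A theta (z i) = A (fun t => (f t ord0 i)%:C%C * theta t) x.
Proof.
move=> sf [xs [dxs [cx cz]]] i th tt.
have L1 := cvg_op tt (cz i).
have tg : test (fun t => (f t ord0 i)%:C%C * th t) by exact: test_mulr.
have L2 := cvg_op tg cx.
have L3 : A th (fa A f (xs j) i) @[j --> \oo] --> A (fun t => (f t ord0 i)%:C%C * th t) x.
  apply: (cvg_trans _ L2); apply: near_eq_cvg; near=> j.
  by rewrite /fa /= op_fa1.
exact: (@norm_cvg_unique _ X _ _ _ _ L1 L3).
Unshelve. all: by end_near.
Qed.

Lemma part_b m (f : V -> 'rV[R]_m) : smoothv f -> closable A f.
Proof.
move=> sf x z1 z2 h1 h2; apply/funext => i; apply: (ker_eq hA) => th tt.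
by rewrite (graph_op sf h1) // (graph_op sf h2).
Qed.

End PartsAB.

Section Leib.
Variables (R : realType) (n : nat).
Notation V := 'rV[R]_n.
Implicit Types (f g h : V -> R).

Lemma Dseq_add vs f g : smooth f -> smooth g ->
  Dseq vs (fun t => f t + g t) = (fun t => Dseq vs f t + Dseq vs g t).
Proof.
move=> sf sg; elim: vs => [//|v vs IH] /=.
rewrite IH; apply: DaddE => x; [exact: (proj2 (sf vs))|exact: (proj2 (sg vs))].
Qed.

Lemma Dseq_opp vs f : smooth f -> Dseq vs (fun t => - f t) = (fun t => - Dseq vs f t).
Proof.
move=> sf; elim: vs => [//|v vs IH] /=.
rewrite IH; apply/funext => x.
have -> : (fun t => - Dseq vs f t) = - (Dseq vs f) by [].
by rewrite deriveN //; exact: (proj2 (sf vs)).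
Qed.

Lemma Dseq_sub vs f g : smooth f -> smooth g ->
  Dseq vs (fun t => f t - g t) = (fun t => Dseq vs f t - Dseq vs g t).
Proof.
move=> sf sg; rewrite Dseq_add //; last exact: smooth_opp.
by rewrite Dseq_opp.
Qed.

Lemma unif0_add (a b : nat -> V -> R) : unif0 a -> unif0 b ->
  unif0 (fun j t => a j t + b j t).
Proof.
move=> ua ub e e0.
have e20 : 0 < e / 2 by rewrite divr_gt0.
apply: filterS2 (ua _ e20) (ub _ e20) => j ha hb t.
apply: le_trans (ler_normD _ _) _.
by rewrite [e]splitr lerD.
Qed.

Lemma hausV : hausdorff_space V.
Proof. exact: norm_hausdorff. Qed.

Definition goodK (K : set V) (gk : nat -> V -> R) :=
  forall vs e, 0 < e -> \forall k \near \oo, forall t, K t -> `|Dseq vs (gk k) t| <= e.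

Lemma leib0 (K : set V) gk h : compact K -> smooth h -> (forall t, ~ K t -> h t = 0) ->
  goodK K gk -> unif0 (fun k t => gk k t * h t).
Proof.
move=> cK sh h0 gK e e0.
have hc : continuous h by have [c _] := sh [::].
have /ex_strict_bound_gt0[M M0 /= hM] : bounded_set (h @` K).
  apply/compact_bounded/continuous_compact => //.
  exact: continuous_subspaceT.
have eM : 0 < e / M by rewrite divr_gt0.
apply: filterS (gK [::] _ eM) => k hk t.
have [Kt|Kt] := pselect (K t); last by rewrite h0 // mulr0 normr0 ltW.
rewrite normrM -(divfK (lt0r_neq0 M0) e).
apply: ler_pM => //; first exact: hk.
by apply: ltW; apply: hM; exists t.
Qed.

End Leib.

Section Leib2.
Variables (R : realType) (n : nat).
Notation V := 'rV[R]_n.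
Implicit Types (f g h : V -> R).

Lemma Dzero_out (K : set V) h v : closed K -> (forall t, ~ K t -> h t = 0) ->
  forall t, ~ K t -> 'D_v h t = 0.
Proof.
move=> cK h0 t Kt.
have oK : open (~` K) by exact: closed_openC.
have E : \forall s \near t, h s = (cst 0 : V -> R) s.
  near=> s; apply: h0; near: s; exact: open_nbhs_nbhs.
by rewrite (near_eq_derive _ E) derive_cst.
Unshelve. all: by end_near.
Qed.

Lemma unif0_eq (a b : nat -> V -> R) : (forall k, a k = b k) -> unif0 b -> unif0 a.
Proof. by move=> E; have -> : a = b by apply/funext. Qed.

Lemma leib N (K : set V) gk h : compact K -> smooth h -> (forall t, ~ K t -> h t = 0) ->
  (forall k, smooth (gk k)) -> goodK K gk ->
  forall vs, (size vs <= N)%N -> unif0 (fun k => Dseq vs (fun t => gk k t * h t)).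
Proof.
move=> cK; elim: N gk h => [|N IH] gk h sh h0 sg gK vs.
  by case: vs => // _; exact: (leib0 cK sh h0 gK).
case/lastP: vs => [_|ws v]; first exact: (leib0 cK sh h0 gK).
rewrite size_rcons ltnS => sw.
have E : forall k, Dseq (rcons ws v) (fun t => gk k t * h t) =
   (fun t => Dseq ws (fun t => 'D_v (gk k) t * h t) t + Dseq ws (fun t => gk k t * 'D_v h t) t).
  move=> k; rewrite Dseq_rcons (DmulE (fun x => proj2 (sg k [::]) x v) (fun x => proj2 (sh [::]) x v)).
  rewrite Dseq_add //.
  - by apply: smooth_mul; [exact: (smoothD (sg k) v)|exact: sh].
  - by apply: smooth_mul; [exact: (sg k)|exact: (smoothD sh v)].
apply: (unif0_eq E).
apply: unif0_add.
- apply: IH => //.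
  + by move=> k; exact: smoothD.
  + by move=> vs' e e0; apply: filterS (gK (rcons vs' v) e e0) => k H t Kt; rewrite -Dseq_rcons; exact: H.
- apply: IH => //.
  + exact: smoothD.
  + apply: Dzero_out => //; exact: compact_closed (@hausV R n) cK.
Qed.

End Leib2.

Section PartC.
Variables (R : realType) (X : completeNormedModType R[i]) (n : nat).
Variable (A : ('rV[R]_n -> R[i]) -> X -> X).
Hypothesis hA : hyperoperator A.
Notation V := 'rV[R]_n.
Implicit Types (f g : V -> R) (phi psi theta : V -> R[i]).

Lemma opnorm0_cvg (T : nat -> X -> X) (y : X) : opnorm0 T -> T j y @[j --> \oo] --> 0.
Proof.
move=> h; apply/cvgr0Pnorm_le => e e0.
have y1 : 0 < `|y| + 1 by apply: ltr_wpDl.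
have e1 : 0 < e / (`|y| + 1) by rewrite divr_gt0.
apply: filterS (h _ e1) => j H; apply: le_trans (H y) _.
rewrite -[leRHS](divfK (lt0r_neq0 y1)).
by apply: ler_wpM2l; [exact: ltW | rewrite lerDl].
Qed.

Lemma part_c p (fk : nat -> V -> 'rV[R]_p) (f : V -> 'rV[R]_p) :
  Ecvg fk f -> forall x, DA A x ->
  forall i : 'I_p, fa A (fk k) x i @[k --> \oo] --> fa A f x i.
Proof.
move=> [sfk [sf cv]] _ [phi [y [tp ->]]] i.
have sfi : smooth (fun t => f t ord0 i) by exact: sf.
have sfki : forall k, smooth (fun t => fk k t ord0 i) by move=> k; exact: sfk.
pose gk k t := fk k t ord0 i - f t ord0 i.
have sg : forall k, smooth (gk k) by move=> k; apply: smooth_add => //; exact: smooth_opp.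
pose psi k t := (gk k t)%:C%C * phi t.
have tpsi : forall k, test (psi k) by move=> k; exact: test_mulr.
have E : forall k, fa A (fk k) (A phi y) i = A (psi k) y + fa A f (A phi y) i.
  move=> k; rewrite /fa !(fa1_rep hA) // -(AD hA) //; last exact: test_mulr.
  by congr (A _ y); apply/funext => t; rewrite /psi /gk rmorphB /=; ring.
have -> : (fun k => fa A (fk k) (A phi y) i) = (fun k => A (psi k) y + fa A f (A phi y) i).
  by apply/funext => k; rewrite E.
suff L1 : A (psi k) y @[k --> \oo] --> (0:X).
  have L := cvgD L1 (cvg_cst (fa A f (A phi y) i)).
  by move: L; rewrite add0r; apply; exact: _.
apply: (@opnorm0_cvg (fun k => A (psi k)) y); case: hA => _ _ _ hc _; apply: hc.
have [_ [_ cphi]] := tp.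
have hK : forall h : V -> R, (forall t, phi t = 0 -> h t = 0) -> forall t, ~ supp phi t -> h t = 0.
  move=> h hh t nt; apply: hh; apply/eqP; apply: contra_notT nt => nz.
  exact: subset_closure.
have gK : goodK (supp phi) gk.
  move=> vs e e0; apply: filterS (cv i vs _ cphi e e0) => k H t Kt.
  by rewrite /gk Dseq_sub //; apply: H.
split => //; split.
  by exists (supp phi); split => // k; apply: supp_sub => t pt; rewrite /psi pt mulr0.
move=> vs; split.
- apply: (@unif0_eq R n _ (fun k => Dseq vs (fun t => gk k t * cRe phi t))).
    move=> k; congr (Dseq vs _); apply/funext => t; rewrite /cRe /psi.
    by case: (phi t) => a b /=; ring.
  apply: (@leib R n (size vs) (supp phi) gk (cRe phi) cphi (proj1 tp)) => //.
  by apply: hK => t; rewrite /cRe => ->.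
- apply: (@unif0_eq R n _ (fun k => Dseq vs (fun t => gk k t * cIm phi t))).
    move=> k; congr (Dseq vs _); apply/funext => t; rewrite /cIm /psi.
    by case: (phi t) => a b /=; ring.
  apply: (@leib R n (size vs) (supp phi) gk (cIm phi) cphi (proj1 (proj2 tp))) => //.
  by apply: hK => t; rewrite /cIm => ->.
Qed.

End PartC.

Section Bump.
Variables (R : realType) (n : nat).
Notation V := 'rV[R]_n.
Implicit Types (f g : V -> R).

Lemma uf_mono (a b : R) : 0 < a -> a <= b -> uf 0 a <= uf 0 b.
Proof.
move=> a0 ab; have b0 : 0 < b by apply: lt_le_trans ab.
rewrite /uf a0 b0 !expr0 !mul1r ler_expR lerN2 lef_pV2 ?posrE //.
Qed.

Lemma smooth_ext f g : (forall t, f t = g t) -> smooth g -> smooth f.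
Proof. by move=> E; have -> : f = g by apply/funext. Qed.

Lemma smooth_prod (I : Type) (s : seq I) (F : I -> V -> R) :
  (forall i, smooth (F i)) -> smooth (fun t => \prod_(i <- s) F i t).
Proof.
move=> sF; elim: s => [|a s IH].
  by apply: (smooth_ext (g := fun _ => 1)) => [t|]; [rewrite big_nil | exact: smooth_cst].
apply: (smooth_ext (g := fun t => F a t * \prod_(i <- s) F i t)) => [t|].
  by rewrite big_cons.
exact: smooth_mul.
Qed.

Lemma smooth_sum (I : Type) (s : seq I) (F : I -> V -> R) :
  (forall i, smooth (F i)) -> smooth (fun t => \sum_(i <- s) F i t).
Proof.
move=> sF; elim: s => [|a s IH].
  by apply: (smooth_ext (g := fun _ => 0)) => [t|]; [rewrite big_nil | exact: smooth_cst].
apply: (smooth_ext (g := fun t => F a t + \sum_(i <- s) F i t)) => [t|].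
  by rewrite big_cons.
exact: smooth_add.
Qed.

Definition bump (c : V) (rho : R) (t : V) : R :=
  \prod_(i < n) uf 0 (rho ^+ 2 - (t ord0 i - c ord0 i) ^+ 2).

Definition cubeC (c : V) (rho : R) : set V :=
  [set t | forall i, `|t ord0 i - c ord0 i| <= rho].

Lemma smooth_bump c rho : smooth (bump c rho).
Proof.
apply: smooth_prod => i; apply: smooth_uf.
apply: smooth_add; first exact: smooth_cst.
apply: smooth_opp.
apply: (smooth_ext (g := fun t => (t ord0 i - c ord0 i) * (t ord0 i - c ord0 i))) => [t|].
  by rewrite expr2.
have sd : smooth (fun t : V => t ord0 i - c ord0 i).
  by apply: smooth_add; [exact: smooth_coord | exact: smooth_cst].
exact: smooth_mul.
Qed.

Lemma bump_ge0 c rho t : 0 <= bump c rho t.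
Proof. by apply: prodr_ge0 => i _; exact: uf_ge0. Qed.

Lemma bump_cube c rho t : 0 < rho -> bump c rho t != 0 -> cubeC c rho t.
Proof.
move=> r0 /prodf_neq0 h i; have := h i isT.
set d := t ord0 i - c ord0 i.
have [p|p] := ltP 0 (rho ^+ 2 - d ^+ 2); last by rewrite uf_le0 // eqxx.
move=> _; rewrite ler_norml; apply/andP; split; nra.
Qed.

Lemma cube_compact c rho : compact (cubeC c rho).
Proof.
have -> : cubeC c rho = [set v : V | forall i,
    (`[(c ord0 i - rho), (c ord0 i + rho)]%classic : set R) (v ord0 i)].
  apply/funext => t; apply/propext; split => h i; have := h i.
    by rewrite ler_distl /= in_itv /=.
  by rewrite ler_distl /= in_itv /=.
apply: (@rV_compact _ n (fun i => `[(c ord0 i - rho), (c ord0 i + rho)]%classic)) => i; exact: segment_compact.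
Qed.

Lemma bump_lb c r t : 0 < r -> ball c r t -> (uf 0 (3 * r ^+ 2)) ^+ n <= bump c (2 * r) t.
Proof.
move=> r0 [_ bt].
rewrite /bump (_ : uf 0 (3 * r ^+ 2) ^+ n = \prod_(i < n) uf 0 (3 * r ^+ 2)); last by rewrite prodr_const card_ord.
apply: ler_prod => i _; rewrite uf_ge0 /=.
have := bt ord0 i; rewrite /ball /= => hd.
apply: uf_mono; first by rewrite mulr_gt0 // exprn_gt0.
set d := t ord0 i - c ord0 i.
have : `|d| < r by rewrite /d distrC.
rewrite ltr_norml => /andP [h1 h2]; nra.
Qed.

End Bump.

Section Cover.
Variables (R : realType) (n : nat).
Notation V := 'rV[R]_n.

Lemma cube_sub_ball (c : V) e : 0 < e -> cubeC c (e / 2) `<=` ball c e.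
Proof.
move=> e0 t ht; split => // i j.
rewrite (ord1 i) /ball /= distrC.
apply: le_lt_trans (ht j) _; rewrite ltr_pdivrMr //; lra.
Qed.

Lemma cube_cover (C : set V) (P : set V -> Prop) : compact C ->
  (forall t, C t -> exists U, [/\ open U, U t & P U]) ->
  exists s : seq (V * R),
    (forall p, p \in s -> 0 < p.2 /\ exists U, P U /\ cubeC p.1 (2 * p.2) `<=` U) /\
    C `<=` [set t | exists2 p, p \in s & ball p.1 p.2 t].
Proof.
move=> cC hU.
have [rr hr] : {rr : V -> R & forall t, C t ->
    0 < rr t /\ exists U, P U /\ cubeC t (2 * rr t) `<=` U}.
  apply: (@choice V R (fun t r => C t -> 0 < r /\ exists U, P U /\ cubeC t (2 * r) `<=` U)) => t.
  have [Ct|Ct] := pselect (C t); last by exists 1.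
  have [U [oU Ut PU]] := hU t Ct.
  have : nbhs t U by apply: open_nbhs_nbhs.
  move=> /nbhs_ballP [e e0 be].
  exists (e / 4) => _; split; first by rewrite divr_gt0.
  exists U; split => //; apply: subset_trans be.
  have -> : 2 * (e / 4) = e / 2 by field.
  exact: cube_sub_ball.
have cov : C `<=` \bigcup_(t in C) ball t (rr t).
  by move=> t Ct; exists t => //; apply: ballxx; case: (hr t Ct).
move: cC; rewrite compact_cover => cC.
have [D' sD cD] := cC V C (fun t => ball t (rr t)) (fun t _ => ball_open t (rr t)) cov.
exists [seq (t, rr t) | t <- finmap.enum_fset D']; split.
  move=> p /mapP [t tD ->] /=; apply: hr.
  by have := sD t tD; rewrite inE.
move=> t /cD [u uD bu]; exists (u, rr u) => //.
by apply/mapP; exists u.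
Qed.

Definition lbm (r : R) : R := uf 0 (3 * r ^+ 2) ^+ n.

Lemma lbm_gt0 r : 0 < r -> 0 < lbm r.
Proof. by move=> r0; rewrite exprn_gt0 // uf_gt0 // mulr_gt0 // exprn_gt0. Qed.

Definition Gb (p : V * R) (t : V) : R := (lbm p.2)^-1 * bump p.1 (2 * p.2) t.

Lemma Gb_smooth p : smooth (Gb p).
Proof. by apply: smooth_mul; [exact: smooth_cst|exact: smooth_bump]. Qed.

Lemma Gb_ge0 p t : 0 < p.2 -> 0 <= Gb p t.
Proof. by move=> p0; rewrite mulr_ge0 ?bump_ge0 // invr_ge0 ltW // lbm_gt0. Qed.

Lemma Gb_ball p t : 0 < p.2 -> ball p.1 p.2 t -> 1 <= Gb p t.
Proof.
move=> p0 bt; rewrite /Gb ler_pdivlMl ?lbm_gt0 // mulr1.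
exact: bump_lb.
Qed.

Lemma Gb_supp p : 0 < p.2 -> closure [set t | Gb p t != 0] `<=` cubeC p.1 (2 * p.2).
Proof.
move=> p0; apply: closure_sub_closed.
  by apply: compact_closed; [exact: (@hausV R n) | exact: cube_compact].
move=> t /= /eqP h; apply: bump_cube; first by rewrite mulr_gt0.
by apply/eqP => b0; apply: h; rewrite /Gb b0 mulr0.
Qed.

Lemma Gb_compact p : 0 < p.2 -> compact (closure [set t | Gb p t != 0]).
Proof.
move=> p0; apply: (@subclosed_compact _ _ (cubeC p.1 (2 * p.2))); [exact: closed_closure | exact: cube_compact | exact: Gb_supp p0].
Qed.

Lemma sum_ge0_seq (I : eqType) (s : seq I) (F : I -> R) :
  (forall i, i \in s -> 0 <= F i) -> 0 <= \sum_(i <- s) F i.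
Proof. by move=> h; rewrite big_seq; apply: sumr_ge0 => i; exact: h. Qed.

Lemma sum_ge_term (I : eqType) (s : seq I) (F : I -> R) (a : I) :
  (forall i, i \in s -> 0 <= F i) -> a \in s -> F a <= \sum_(i <- s) F i.
Proof.
elim: s => // b s IH h; rewrite in_cons big_cons => /orP [/eqP ->|aS].
  rewrite lerDl; apply: sum_ge0_seq => i iS; apply: h.
  by rewrite in_cons iS orbT.
apply: le_trans (IH _ aS) _.
  by move=> i iS; apply: h; rewrite in_cons iS orbT.
by rewrite lerDr; apply: h; rewrite in_cons eqxx.
Qed.

End Cover.

Section Step.
Variables (R : realType) (n : nat).
Notation V := 'rV[R]_n.
Implicit Types (f g q : V -> R).

Definition Sf (s : R) : R := uf 0 s / (uf 0 s + uf 0 (1 - s)).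

Lemma Sden_gt0 (s : R) : 0 < uf 0 s + uf 0 (1 - s).
Proof.
have [s0|s0] := ltP 0 s.
  by apply: ltr_wpDr; [exact: uf_ge0 | exact: uf_gt0].
by apply: ltr_wpDl; [exact: uf_ge0 | apply: uf_gt0; lra].
Qed.

Lemma Sf_ge0 s : 0 <= Sf s.
Proof. by rewrite /Sf divr_ge0 // ?uf_ge0 // ltW // Sden_gt0. Qed.

Lemma Sf_1 (s : R) : 1 <= s -> Sf s = 1.
Proof.
move=> s1; rewrite /Sf (@uf_le0 R 0 (1 - s)) ?addr0 ?divff //; last lra.
by rewrite gt_eqF // uf_gt0 //; lra.
Qed.

Lemma Sf_lt1 (s : R) : s < 1 -> Sf s < 1.
Proof.
move=> s1; rewrite /Sf ltr_pdivrMr ?Sden_gt0 // mul1r ltrDl uf_gt0 //; lra.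
Qed.

Lemma Sf_0 (s : R) : s <= 0 -> Sf s = 0.
Proof. by move=> s0; rewrite /Sf uf_le0 // mul0r. Qed.

Lemma smooth_Sf q : smooth q -> smooth (fun t => Sf (q t)).
Proof.
move=> sq; apply: smooth_mul; first exact: smooth_uf.
apply: (smooth_inv (f := fun t => uf 0 (q t) + uf 0 (1 - q t))); last first.
  by move=> t; rewrite gt_eqF // Sden_gt0.
apply: smooth_add; first exact: smooth_uf.
apply: (@smooth_uf R n 0 (fun t => 1 - q t)); apply: smooth_add; first exact: smooth_cst.
exact: smooth_opp.
Qed.

Definition cubes (s : seq (V * R)) : set V :=
  [set t | exists2 p, p \in s & cubeC p.1 (2 * p.2) t].

Lemma cubes_compact s : compact (cubes s).
Proof.
elim: s => [|a s IH].
  have -> : cubes [::] = set0 by apply/funext => t; apply/propext; split => // -[].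
  exact: compact0.
have -> : cubes (a :: s) = cubeC a.1 (2 * a.2) `|` cubes s.
  apply/funext => t; apply/propext; split.
    by move=> [p]; rewrite in_cons => /orP [/eqP -> h|pS h]; [left|right; exists p].
  case=> [h|[p pS h]]; first by exists a => //; rewrite in_cons eqxx.
  by exists p => //; rewrite in_cons pS orbT.
apply: compactU => //; exact: cube_compact.
Qed.

Definition balls (s : seq (V * R)) : set V :=
  [set t | exists2 p, p \in s & ball p.1 p.2 t].

Lemma balls_open s : open (balls s).
Proof.
have -> : balls s = \bigcup_(p in [set p | p \in s]) ball p.1 p.2.
  by apply/funext => t; apply/propext; split => -[p pS h]; exists p.
by apply: bigcup_open => p _; exact: ball_open.
Qed.

Definition gsum (s : seq (V * R)) (t : V) : R := \sum_(p <- s) Gb p t.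

Lemma gsum_smooth s : smooth (gsum s).
Proof. by apply: smooth_sum => p; exact: Gb_smooth. Qed.

Lemma gsum_ge0 s t : (forall p, p \in s -> 0 < p.2) -> 0 <= gsum s t.
Proof. by move=> h; apply: sum_ge0_seq => p pS; apply: Gb_ge0; exact: h. Qed.

Lemma gsum_ge1 s t : (forall p, p \in s -> 0 < p.2) -> balls s t -> 1 <= gsum s t.
Proof.
move=> h [p pS bt]; apply: le_trans (Gb_ball (h p pS) bt) _.
by rewrite /gsum; apply: (@sum_ge_term R _ s (fun pp => Gb pp t) p) => // pp ppS; apply: Gb_ge0; exact: h.
Qed.

Lemma gsum_supp s t : (forall p, p \in s -> 0 < p.2) -> gsum s t != 0 -> cubes s t.
Proof.
move=> h nz; have [[p pS gp]|H] := pselect (exists2 p, p \in s & Gb p t != 0).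
  exists p => //; apply: (Gb_supp (h p pS)); exact: subset_closure.
exfalso; move/eqP: nz; apply; rewrite /gsum big_seq big1 // => p pS.
by apply/eqP; apply: contra_notT H => gp; exists p.
Qed.

Lemma cutoff (K : set V) : compact K ->
  exists chi : V -> R, [/\ smooth chi, compact (closure [set t | chi t != 0]) &
    exists W, [/\ open W, K `<=` W & forall t, W t -> chi t = 1]].
Proof.
move=> cK.
have [s [hs cov]] := @cube_cover R n K (fun _ => True) cK
   (fun t _ => ex_intro _ setT (And3 openT I I)).
have h0 : forall p, p \in s -> 0 < p.2 by move=> p pS; case: (hs p pS).
exists (fun t => Sf (gsum s t)); split.
- exact/smooth_Sf/gsum_smooth.
- apply: (@subclosed_compact _ _ (cubes s)); [exact: closed_closure | exact: cubes_compact |].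
  apply: closure_sub_closed.
    by apply: compact_closed; [exact: (@hausV R n) | exact: cubes_compact].
  move=> t /= /eqP nz; apply: gsum_supp => //; apply/eqP => g0; apply: nz.
  by rewrite g0 Sf_0.
- exists (balls s); split; [exact: balls_open | exact: cov |].
  by move=> t bt; apply: Sf_1; exact: gsum_ge1.
Qed.

End Step.

Section PartD.
Variables (R : realType) (X : completeNormedModType R[i]) (n : nat).
Variable (A : ('rV[R]_n -> R[i]) -> X -> X).
Hypothesis hA : hyperoperator A.
Notation V := 'rV[R]_n.
Implicit Types (phi psi theta : V -> R[i]).

Lemma test_ext phi psi : (forall t, phi t = psi t) -> test psi -> test phi.
Proof. by move=> E; have -> : phi = psi by apply/funext. Qed.

Lemma A_ext phi psi (x : X) : (forall t, phi t = psi t) -> A phi x = A psi x.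
Proof. by move=> E; have -> : phi = psi by apply/funext. Qed.

Lemma rc_neq0 (a : R) : (((a%:C)%C : R[i]) != 0) = (a != 0).
Proof. by rewrite fmorph_eq0. Qed.

Lemma gsum_null (s : seq (V * R)) (x : X) :
  (forall p, p \in s -> test (fun t => ((Gb p t)%:C)%C) /\ A (fun t => ((Gb p t)%:C)%C) x = 0) ->
  test (fun t => ((gsum s t)%:C)%C) /\ A (fun t => ((gsum s t)%:C)%C) x = 0.
Proof.
elim: s => [_|a s IH h].
  have E : forall t, ((gsum [::] t)%:C)%C = (fun _ : V => 0 : R[i]) t.
    by move=> t; rewrite /gsum big_nil rmorph0.
  split; first exact: (test_ext E (@test0 R n)).
  by rewrite (A_ext _ E) (A0 hA).
have [ta na] := h a (mem_head _ _).
have [ts ns] : test (fun t => ((gsum s t)%:C)%C) /\ A (fun t => ((gsum s t)%:C)%C) x = 0.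
  by apply: IH => p pS; apply: h; rewrite in_cons pS orbT.
have E : forall t, ((gsum (a :: s) t)%:C)%C =
   (fun t => 1 * ((Gb a t)%:C)%C + ((gsum s t)%:C)%C) t.
  by move=> t; rewrite /gsum big_cons rmorphD mul1r.
split; first exact: (test_ext E (test_lin 1 ta ts)).
by rewrite (A_ext _ E) (hA_lin hA 1 ta ts) na ns scaler0 addr0.
Qed.

End PartD.

Section PartD2.
Variables (R : realType) (X : completeNormedModType R[i]) (n : nat).
Variable (A : ('rV[R]_n -> R[i]) -> X -> X).
Hypothesis hA : hyperoperator A.
Notation V := 'rV[R]_n.
Implicit Types (phi psi theta : V -> R[i]).

Lemma nullL (x : X) psi (W : set V) : test psi -> open W ->
  locspec A x `<=` W -> (forall t, W t -> psi t = 0) -> A psi x = 0.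
Proof.
move=> tp oW hloc hW.
have [_ [_ cpsi]] := tp.
have hCW : supp psi `<=` ~` W.
  apply: closure_sub_closed; first exact: open_closedC.
  by move=> t /= /eqP nz Wt; apply: nz; exact: hW.
pose P (U : set V) := forall phi, test phi -> supp phi `<=` U -> A phi x = 0.
have hU : forall t, supp psi t -> exists U, [/\ open U, U t & P U].
  move=> t Ct; case: (pselect (exists U, [/\ open U, U t & P U])) => // H.
  exfalso; apply: (hCW t Ct); apply: hloc => U oU Ut.
  case: (pselect (exists phi, [/\ test phi, supp phi `<=` U & A phi x != 0])) => [[phi [? ? ?]]|H2].
    by exists phi.
  exfalso; apply: H; exists U; split => // phi tphi sphi.
  apply: contrapT => nz; apply: H2; exists phi; split => //; exact/eqP.
have [s [hs cov]] := @cube_cover R n (supp psi) P cpsi hU.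
have h0 : forall p, p \in s -> 0 < p.2 by move=> p pS; case: (hs p pS).
have [tg ng] : test (fun t => ((gsum s t)%:C)%C) /\ A (fun t => ((gsum s t)%:C)%C) x = 0.
  apply: (gsum_null hA) => p pS.
  have [p0 [U [PU sU]]] := hs p pS.
  have tGp : test (fun t => ((Gb p t)%:C)%C).
    by apply: test_real; [exact: Gb_smooth | exact: Gb_compact].
  split => //; apply: PU => //.
  rewrite /supp; apply: subset_trans sU; apply: subset_trans (Gb_supp p0).
  by apply: closureS => t /=; rewrite rc_neq0.
pose G t := gsum s t + (1 - Sf (gsum s t)).
have G0 : forall t, 0 < G t.
  move=> t; rewrite /G; have g0 := gsum_ge0 t h0.
  have [g1|g1] := leP 1 (gsum s t).
    by rewrite Sf_1 // subrr addr0; apply: lt_le_trans g1.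
  by apply: ltr_wpDl => //; rewrite subr_gt0; exact: Sf_lt1.
have sG : smooth G.
  apply: smooth_add; first exact: gsum_smooth.
  apply: smooth_add; first exact: smooth_cst.
  by apply: smooth_opp; apply: smooth_Sf; exact: gsum_smooth.
pose psi' t := (((G t)^-1)%:C)%C * psi t.
have tp' : test psi'.
  apply: test_mulr => //; apply: smooth_inv => // t; exact: lt0r_neq0.
have E : forall t, psi t = (fun t => psi' t * ((gsum s t)%:C)%C) t.
  move=> t /=; have [E0|nz] := eqVneq (psi t) 0; first by rewrite /psi' E0 mulr0 mul0r.
  have Ct : supp psi t by apply: subset_closure; exact: nz.
  have g1 : 1 <= gsum s t by apply: gsum_ge1 => //; exact: cov.
  have Gg : G t = gsum s t by rewrite /G Sf_1 // subrr addr0.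
  rewrite /psi' Gg mulrAC -rmorphM mulVf ?rmorph1 ?mul1r //.
  by rewrite gt_eqF //; apply: lt_le_trans g1.
by rewrite (@A_ext R X n A psi _ x E) (AM hA) // ng (op0 hA).
Qed.

End PartD2.

Section PartD3.
Variables (R : realType) (X : completeNormedModType R[i]) (n : nat).
Variable (A : ('rV[R]_n -> R[i]) -> X -> X).
Hypothesis hA : hyperoperator A.
Notation V := 'rV[R]_n.
Implicit Types (phi psi theta : V -> R[i]).

Lemma part_d m (K : set V) (xs : nat -> X) (x : X) (f : V -> 'rV[R]_m) :
  compact K -> (forall j, DAK A K (xs j)) -> xs j @[j --> \oo] --> x -> smoothv f ->
  forall i, fa A f (xs j) i @[j --> \oo] --> fa A f x i.
Proof.
move=> cK dK cx sf i.
have [chi [schi cchi [W [oW KW W1]]]] := cutoff cK.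
pose chic t := ((chi t)%:C)%C.
have tc : test chic by exact: test_real.
have hfix : forall y, DAK A K y -> A chic y = y.
  move=> y dy; apply: esym; apply: (ker_eq hA) => th tt.
  rewrite -(AM hA) //.
  pose ps t := th t - th t * chic t.
  have tps : test ps.
    apply: (test_ext (psi := fun t => -1 * (th t * chic t) + th t)) => [t|].
      by rewrite /ps mulN1r addrC.
    by apply: test_lin => //; exact: test_mul.
  have : A ps y = 0.
    apply: (nullL hA (W := W)) => //.
      by move=> t Lt; apply: KW; exact: dy.
    by move=> t Wt; rewrite /ps /chic W1 // rmorph1 mulr1 subrr.
  rewrite /ps (AB hA) //; last exact: test_mul.
  by move=> /eqP; rewrite subr_eq0 => /eqP.
have ex : A chic x = x.
  have L1 := cvg_op hA tc cx.
  have L2 : A chic (xs j) @[j --> \oo] --> x.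
    apply: (cvg_trans _ cx); apply: near_eq_cvg; near=> j.
    by rewrite hfix.
  exact: (@norm_cvg_unique _ X _ _ _ _ L1 L2).
have tf : test (fun t => ((f t ord0 i)%:C)%C * chic t) by apply: test_mulr => //; exact: sf.
have Efa : fa A f x i = A (fun t => ((f t ord0 i)%:C)%C * chic t) x.
  by have := fa1_rep hA x (sf i) tc; rewrite ex.
rewrite Efa; apply: (cvg_trans _ (cvg_op hA tf cx)).
apply: near_eq_cvg; near=> j.
by rewrite /fa; have := fa1_rep hA (xs j) (sf i) tc; rewrite hfix.
Unshelve. all: by end_near.
Qed.

End PartD3.

Unset Implicit Arguments. Set Strict Implicit.

Theorem proposition4p1 (R : realType) (X : completeNormedModType R[i]) (n : nat)
    (A : ('rV[R]_n -> R[i]) -> X -> X) :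
  hyperoperator A ->
  [/\ (* (a) *)
      (forall f : 'rV[R]_n -> R, smooth f ->
         (forall x, DA A x -> DA A (fa1 A f x)) /\
         (forall g : 'rV[R]_n -> R, smooth g ->
            forall x, DA A x -> fa1 A g (fa1 A f x) = fa1 A (fun t => f t * g t) x)),
      (* (b) *)
      (forall (m : nat) (f : 'rV[R]_n -> 'rV[R]_m), smoothv f -> closable A f),
      (* (c) *)
      (forall (p : nat) (fk : nat -> 'rV[R]_n -> 'rV[R]_p) (f : 'rV[R]_n -> 'rV[R]_p),
         Ecvg fk f -> forall x, DA A x ->
           forall i : 'I_p, fa A (fk k) x i @[k --> \oo] --> fa A f x i) &
      (* (d) *)
      (forall (m : nat) (K : set 'rV[R]_n) (xs : nat -> X) (x : X)
              (f : 'rV[R]_n -> 'rV[R]_m),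
         compact K -> (forall j, DAK A K (xs j)) -> xs j @[j --> \oo] --> x ->
         smoothv f ->
         forall i : 'I_m, fa A f (xs j) i @[j --> \oo] --> fa A f x i)].
Proof.
move=> hA; split.
- by move=> f sf; exact: part_a.
- by move=> m f sf; exact: part_b.
- by move=> p fk f ec x dx i; exact: part_c.
- by move=> m K xs x f cK dK cx sf i; exact: (part_d hA cK dK cx sf).
Qed.
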